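(* Let $\mathfrak{U}$ be a Banach algebra such that $\mathfrak{U}^\sharp$ is symmetrically pseudo-amenable, with a symmetric approximate diagonal $\{\mathbf{t}_\lambda\}_{\lambda\in\Lambda}\subseteq\mathfrak{U}^\sharp\widehat{\otimes}\mathfrak{U}^\sharp$. Let $X$ be a Banach $\mathfrak{U}$-bimodule such that for each $x\in X$ the net $\{\psi_x(\mathbf{t}_\lambda)\}_{\lambda\in\Lambda}$ is bounded, and let $D:\mathfrak{U}\to X$ be a bounded Lie derivation such that the net $\{\Phi_D(\mathbf{t}_\lambda)\}_{\lambda\in\Lambda}$ is bounded. Then there exist a bounded derivation $d:\mathfrak{U}\to X$ and a bounded linear map $\tau:\mathfrak{U}\to\mathcal{Z}_{\mathfrak{U}}(X)$ with $\tau(ab-ba)=0$ for all $a,b\in\mathfrak{U}$ (a central trace), such that $D=d+\tau$.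
   Context: $\mathfrak{U}^\sharp=\mathfrak{U}\oplus\mathbb{C}1$ is the unitization of $\mathfrak{U}$ with the $\ell^1$-norm (a unit is adjoined even if $\mathfrak{U}$ is unital); a Banach $\mathfrak{U}$-bimodule $X$ is made a unital Banach $\mathfrak{U}^\sharp$-bimodule by $1x=x1=x$. $\mathcal{Z}_{\mathfrak{U}}(X)=\{x\in X: ax=xa\ \forall a\in\mathfrak{U}\}$. For $x\in X$, $\psi_x:\mathfrak{U}^\sharp\widehat{\otimes}\mathfrak{U}^\sharp\to X$ is the bounded linear map with $\psi_x(a\otimes b)=axb$. For a bounded linear map $T:\mathfrak{U}\to X$, extended to $\mathfrak{U}^\sharp$ by $T(1)=0$, $\Phi_T:\mathfrak{U}^\sharp\widehat{\otimes}\mathfrak{U}^\sharp\to X$ is the bounded linear map with $\Phi_T(a\otimes b)=aT(b)$. A linear map $\delta$ is a derivation if $\delta(ab)=\delta(a)b+a\delta(b)$, and a Lie derivation if $\delta(ab-ba)=\delta(a)b+a\delta(b)-\delta(b)a-b\delta(a)$, for all $a,b$. For a Banach algebra $\mathfrak{A}$, $\mathfrak{A}\widehat{\otimes}\mathfrak{A}$ is the projective tensor product with $a(b\otimes c)=ab\otimes c$, $(b\otimes c)a=b\otimes ca$, $\pi(b\otimes c)=bc$ (extended linearly and continuously); the flip is $(b\otimes c)^\circ=c\otimes b$ and $\mathbf{t}$ is symmetric if $\mathbf{t}^\circ=\mathbf{t}$. A symmetric approximate diagonal is a net $\{\mathbf{t}_\lambda\}$ (not necessarily bounded) of symmetric elements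 with $a\mathbf{t}_\lambda-\mathbf{t}_\lambda a\to0$ and $\pi(\mathbf{t}_\lambda)a\to a$ for all $a\in\mathfrak{A}$; $\mathfrak{A}$ is symmetrically pseudo-amenable if it has one. *)

(* Defs.v *)
From HB Require Import structures.
From mathcomp Require Import all_boot all_order all_algebra.
From mathcomp Require Import complex.
From mathcomp Require Import all_classical all_reals all_analysis.
Set Implicit Arguments. Unset Strict Implicit. Unset Printing Implicit Defensive.
Import Order.TTheory GRing.Theory Num.Theory.
Local Open Scope ring_scope.
Local Open Scope complex_scope.

Definition islinear (K : numDomainType) (E F : lmodType K) (f : E -> F) :=
  forall (a : K) (u v : E), f (a *: u + v) = a *: f u + f v.

Definition bilinear_map (K : numDomainType) (E F G : lmodType K) (b : E -> F -> G) :=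
  (forall e, islinear (b e)) /\ (forall f, islinear (fun e => b e f)).

Definition bounded_op (K : numDomainType) (E F : Type) (nE : E -> K) (nF : F -> K)
  (f : E -> F) := exists M : K, forall u, nF (f u) <= M * nE u.

Definition banach_algebra (R : realType) (A : completeNormedModType R[i])
  (mul : A -> A -> A) :=
  [/\ bilinear_map mul,
      (forall a b c, mul a (mul b c) = mul (mul a b) c) &
      (forall a b, `|mul a b| <= `|a| * `|b|)].

Definition banach_bimodule (R : realType) (A X : completeNormedModType R[i])
  (mul : A -> A -> A) (lm : A -> X -> X) (rm : X -> A -> X) :=
  [/\ bilinear_map lm, bilinear_map rm,
      (forall a x, `|lm a x| <= `|a| * `|x|),
      (forall x a, `|rm x a| <= `|x| * `|a|) &
      [/\ (forall a b x, lm (mul a b) x = lm a (lm b x)),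
          (forall x a b, rm x (mul a b) = rm (rm x a) b) &
          (forall a x b, lm a (rm x b) = rm (lm a x) b)]].

(* Unitization A^# = A (+) C1 with l^1 norm; (a, alpha) stands for a + alpha 1 *)
Definition unit_mul (R : realType) (A : completeNormedModType R[i])
  (mul : A -> A -> A) (u v : A * R[i]) : A * R[i] :=
  (mul u.1 v.1 + u.2 *: v.1 + v.2 *: u.1, u.2 * v.2).

Definition unit_norm (R : realType) (A : completeNormedModType R[i])
  (u : A * R[i]) : R[i] := `|u.1| + `|u.2|.

Definition unit_lact (R : realType) (A X : completeNormedModType R[i])
  (lm : A -> X -> X) (u : A * R[i]) (x : X) : X := lm u.1 x + u.2 *: x.

Definition unit_ract (R : realType) (A X : completeNormedModType R[i])
  (rm : X -> A -> X) (x : X) (u : A * R[i]) : X := rm x u.1 + u.2 *: x.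

Definition is_derivation (R : realType) (A X : completeNormedModType R[i])
  (mul : A -> A -> A) (lm : A -> X -> X) (rm : X -> A -> X) (d : A -> X) :=
  islinear d /\ forall a b, d (mul a b) = rm (d a) b + lm a (d b).

Definition is_lie_derivation (R : realType) (A X : completeNormedModType R[i])
  (mul : A -> A -> A) (lm : A -> X -> X) (rm : X -> A -> X) (d : A -> X) :=
  islinear d /\ forall a b,
    d (mul a b - mul b a) = rm (d a) b + lm a (d b) - rm (d b) a - lm b (d a).

Definition in_center (R : realType) (A X : completeNormedModType R[i])
  (lm : A -> X -> X) (rm : X -> A -> X) (x : X) :=
  forall a : A, lm a x = rm x a.

(* Projective tensor product E (^) E of a normed space (E, nE), given through its
   universal property: tens is bilinear of norm <= 1, and every bounded bilinear
   map into a Banach space factors uniquely through a bounded linear map of the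
   same bound.  This determines (T, tens) up to isometric isomorphism. *)
Definition is_proj_tensor (R : realType) (E : lmodType R[i]) (nE : E -> R[i])
  (T : completeNormedModType R[i]) (tens : E -> E -> T) :=
  [/\ bilinear_map tens,
      (forall e f, `|tens e f| <= nE e * nE f) &
      (forall (Z : completeNormedModType R[i]) (beta : E -> E -> Z) (M : R[i]),
         bilinear_map beta -> 0 <= M ->
         (forall e f, `|beta e f| <= M * nE e * nE f) ->
         exists L : T -> Z,
           [/\ islinear L,
               (forall e f, L (tens e f) = beta e f),
               (forall t, `|L t| <= M * `|t|) &
               (forall L' : T -> Z, islinear L' -> bounded_op Num.norm Num.norm L' ->
                  (forall e f, L' (tens e f) = beta e f) -> L' = L)])].

Definition directed (L : Type) (le : L -> L -> Prop) :=
  [/\ inhabited L, (forall l, le l l),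
      (forall a b c, le a b -> le b c -> le a c) &
      (forall a b, exists c, le a c /\ le b c)].

Definition net_to0 (L : Type) (le : L -> L -> Prop) (K : numDomainType) (f : L -> K) :=
  forall e : K, 0 < e -> exists l0, forall l, le l0 l -> f l < e.

Definition net_bounded (L : Type) (F : Type) (K : numDomainType) (nF : F -> K) (f : L -> F) :=
  exists M : K, forall l, nF (f l) <= M.

(* Main.v *)
Require Import Defs.
From HB Require Import structures.
From mathcomp Require Import all_boot all_order all_algebra.
From mathcomp Require Import complex.
From mathcomp Require Import all_classical all_reals all_analysis.
From mathcomp Require Import ring.
Import Order.TTheory GRing.Theory Num.Theory.
Local Open Scope ring_scope.
Local Open Scope complex_scope.
Local Open Scope classical_set_scope.
Set Implicit Arguments. Unset Strict Implicit. Unset Printing Implicit Defensive.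

Section Gen.
Variable R : realType.
Local Notation K := (R[i]).

Lemma lin0 (E F : lmodType K) (f : E -> F) : islinear f -> f 0 = 0.
Proof.
move=> hf; have h := hf 1 0 0; rewrite !scale1r addr0 in h.
have : f 0 + f 0 - f 0 = f 0 - f 0 by rewrite -h.
by rewrite addrK subrr.
Qed.

Lemma linD (E F : lmodType K) (f : E -> F) u v : islinear f -> f (u + v) = f u + f v.
Proof. by move=> hf; have := hf 1 u v; rewrite !scale1r. Qed.

Lemma linZ (E F : lmodType K) (f : E -> F) c u : islinear f -> f (c *: u) = c *: f u.
Proof. by move=> hf; have := hf c u 0; rewrite !addr0 (lin0 hf) addr0. Qed.

Lemma linN (E F : lmodType K) (f : E -> F) u : islinear f -> f (- u) = - f u.
Proof. by move=> hf; rewrite -scaleN1r linZ // scaleN1r. Qed.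

Lemma linB (E F : lmodType K) (f : E -> F) u v : islinear f -> f (u - v) = f u - f v.
Proof. by move=> hf; rewrite linD // linN. Qed.

Lemma bnd_pos (E F : Type) (nE : E -> K) (nF : F -> K) (f : E -> F) :
  (forall u, 0 <= nF u) -> (forall u, 0 <= nE u) ->
  bounded_op nE nF f -> exists M : K, 0 <= M /\ forall u, nF (f u) <= M * nE u.
Proof.
move=> hF hE [M hM]; exists `|M|; split => // u.
have h1 := hM u; have h0 : 0 <= M * nE u by apply: le_trans (hF _) h1.
apply: (le_trans h1); rewrite -(ger0_norm h0) normrM (ger0_norm (hE u)) //.
Qed.

Lemma lin_comp (E F G : lmodType K) (f : F -> G) (g : E -> F) :
  islinear f -> islinear g -> islinear (fun t => f (g t)).
Proof. by move=> hf hg c u v; rewrite hg hf. Qed.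
Lemma lin_add (E F : lmodType K) (f g : E -> F) :
  islinear f -> islinear g -> islinear (fun t => f t + g t).
Proof.
move=> hf hg c u v; rewrite hf hg scalerDr -!addrA; congr (_ + _).
by rewrite addrCA.
Qed.
Lemma lin_sub (E F : lmodType K) (f g : E -> F) :
  islinear f -> islinear g -> islinear (fun t => f t - g t).
Proof.
move=> hf hg c u v; rewrite hf hg scalerBr opprD -!addrA; congr (_ + _).
by rewrite addrCA.
Qed.
Lemma bnd_comp (E F G : Type) (nE : E -> K) (nF : F -> K) (nG : G -> K) (f : F -> G) (g : E -> F) :
  (forall u, 0 <= nE u) -> (forall u, 0 <= nF u) -> (forall u, 0 <= nG u) ->
  bounded_op nF nG f -> bounded_op nE nF g -> bounded_op nE nG (fun t => f (g t)).
Proof.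
move=> hE hF hG bf bg.
have [M1 [M10 h1]] := bnd_pos hG hF bf; have [M2 [M20 h2]] := bnd_pos hF hE bg.
exists (M1 * M2) => u; apply: (le_trans (h1 _)); rewrite -mulrA ler_wpM2l //.
Qed.
Lemma bnd_add (E : Type) (F : normedModType K) (nE : E -> K) (f g : E -> F) :
  (forall u, 0 <= nE u) -> bounded_op nE Num.norm f -> bounded_op nE Num.norm g ->
  bounded_op nE Num.norm (fun t => f t + g t).
Proof.
move=> hE bf bg.
have [M1 [M10 h1]] := bnd_pos (fun _ => normr_ge0 _) hE bf.
have [M2 [M20 h2]] := bnd_pos (fun _ => normr_ge0 _) hE bg.
exists (M1 + M2) => u; rewrite mulrDl (le_trans (ler_normD _ _)) // lerD //.
Qed.
Lemma bnd_sub (E : Type) (F : normedModType K) (nE : E -> K) (f g : E -> F) :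
  (forall u, 0 <= nE u) -> bounded_op nE Num.norm f -> bounded_op nE Num.norm g ->
  bounded_op nE Num.norm (fun t => f t - g t).
Proof.
move=> hE bf bg; apply: bnd_add => //.
by case: bg => M hM; exists M => u; rewrite normrN.
Qed.
Lemma lin_id (E : lmodType K) : islinear (fun t : E => t).
Proof. by []. Qed.
Lemma bnd_id (E : normedModType K) : bounded_op Num.norm Num.norm (fun t : E => t).
Proof. by exists 1 => u; rewrite mul1r. Qed.

End Gen.
Section Nets.
Variable R : realType.
Local Notation K := (R[i]).
Variables (Lam : Type) (le : Lam -> Lam -> Prop).
Hypothesis hdir : directed le.

Definition netF : set_system Lam := filter_from setT (fun l0 => [set l | le l0 l]).

Lemma netF_proper : ProperFilter netF.
Proof.
case: hdir => [[l0] hr ht hu].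
apply: filter_from_proper; last by move=> i _; exists i; apply: hr.
apply: filter_fromT_filter; first by exists l0.
move=> i j; have [k [ik jk]] := hu i j; exists k => l /= kl.
by split; apply: ht kl.
Qed.

Lemma net_complete (X : completeNormedModType K) (z : Lam -> X) :
  (forall e : K, 0 < e -> exists l0, forall l m, le l0 l -> le l0 m -> `|z l - z m| < e) ->
  exists y, forall e : K, 0 < e -> exists l0, forall l, le l0 l -> `|y - z l| < e.
Proof.
move=> hc; have PF := netF_proper.
have hcv : cvg (z @ netF).
  apply: cauchy_cvg; apply: cauchy_exP => e e0.
  have [l0 hl0] := hc e e0; exists (z l0); exists l0 => // l /= hl.
  rewrite -ball_normE /=; apply: hl0 => //.
  by case: hdir => _ hr _ _; apply: hr.
exists (lim (z @ netF)) => e e0.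
have := @cvgr_dist_lt _ _ _ _ _ z _ hcv e e0; case => l0 _ hl0.
by exists l0 => l hl; apply: (hl0 l hl).
Qed.

End Nets.
Section Subsp.
Variable R : realType.
Local Notation K := (R[i]).
Variables (T : completeNormedModType K) (P : T -> Prop).
Hypothesis hP0 : P 0.
Hypothesis hPl : forall (c : K) s1 s2, P s1 -> P s2 -> P (c *: s1 + s2).
Hypothesis hPc : forall s, (forall e : K, 0 < e -> exists s', P s' /\ `|s - s'| < e) -> P s.

Record SP := MkS { sv : T; sP : `[< P sv >] }.
HB.instance Definition _ := [isSub for sv].
HB.instance Definition _ := [Choice of SP by <:].

Let mk (s : T) (h : P s) : SP := MkS (asboolT h).
Let svP (x : SP) : P (sv x) := asboolW (sP x).

Let PD s1 s2 : P s1 -> P s2 -> P (s1 + s2).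
Proof. by move=> h1 h2; have := hPl 1 h1 h2; rewrite scale1r. Qed.
Let PZ c s : P s -> P (c *: s).
Proof. by move=> h; have := hPl c h hP0; rewrite addr0. Qed.
Let PN s : P s -> P (- s).
Proof. by move=> h; have := PZ (-1) h; rewrite scaleN1r. Qed.

Definition s0 : SP := mk hP0.
Definition sadd (x y : SP) : SP := mk (PD (svP x) (svP y)).
Definition sopp (x : SP) : SP := mk (PN (svP x)).
Definition sscale (c : K) (x : SP) : SP := mk (PZ c (svP x)).

Lemma sv_inj : injective sv. Proof. exact: val_inj. Qed.

Lemma saddA : associative sadd.
Proof. by move=> x y z; apply: sv_inj; rewrite /= addrA. Qed.
Lemma saddC : commutative sadd.
Proof. by move=> x y; apply: sv_inj; rewrite /= addrC. Qed.
Lemma sadd0 : left_id s0 sadd.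
Proof. by move=> x; apply: sv_inj; rewrite /= add0r. Qed.
Lemma saddN : left_inverse s0 sopp sadd.
Proof. by move=> x; apply: sv_inj; rewrite /= addNr. Qed.
HB.instance Definition _ := GRing.isZmodule.Build SP saddA saddC sadd0 saddN.

Lemma sscaleA a b v : sscale a (sscale b v) = sscale (a * b) v.
Proof. by apply: sv_inj; rewrite /= scalerA. Qed.
Lemma sscale1 : left_id 1 sscale.
Proof. by move=> x; apply: sv_inj; rewrite /= scale1r. Qed.
Lemma sscaleDr : right_distributive sscale +%R.
Proof. by move=> a x y; apply: sv_inj; rewrite /= scalerDr. Qed.
Lemma sscaleDl v : {morph sscale^~ v: a b / a + b}.
Proof. by move=> a b; apply: sv_inj; rewrite /= scalerDl. Qed.
HB.instance Definition _ := GRing.Zmodule_isLmodule.Build K SP sscaleA sscale1 sscaleDr sscaleDl.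

Definition snorm (x : SP) : K := `|sv x|.
Lemma snormD x y : snorm (x + y) <= snorm x + snorm y.
Proof. exact: ler_normD. Qed.
Lemma snormZ (l : K) x : snorm (l *: x) = `|l| * snorm x.
Proof. exact: normrZ. Qed.
Lemma snorm0 x : snorm x = 0 -> x = 0.
Proof. by move=> /normr0_eq0 h; apply: sv_inj. Qed.
HB.instance Definition _ := Lmodule_isNormed.Build K SP snormD snormZ snorm0.

Lemma SP_complete (F : set_system SP) : ProperFilter F -> cauchy F -> cvg F.
Proof.
move=> FF /cauchyP hF.
have hT : cvg (sv @ F).
  apply: cauchy_cvg; apply: cauchy_exP => e e0.
  have [x hx] := hF e e0; exists (sv x).
  by apply: (@filterS _ _ _ (ball x e)) hx => // z; rewrite -!ball_normE /=.
set y := lim (sv @ F).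
have Py : P y.
  apply: hPc => e e0.
  have := @cvgr_dist_lt _ _ _ _ (@filter_filter _ _ FF) sv _ hT e e0 => /filter_ex [x hx].
  by exists (sv x); split => //; apply: svP.
apply/cvg_ex; exists (mk Py).
apply/fcvgrPdist_lt => e e0.
have := @cvgr_dist_lt _ _ _ _ (@filter_filter _ _ FF) sv _ hT e e0.
by apply: filterS => x.
Qed.
HB.instance Definition _ := Uniform_isComplete.Build SP SP_complete.

Definition SPc : completeNormedModType K := SP.

End Subsp.

Section Tens.
Variable R : realType.
Local Notation K := (R[i]).
Variables (E : lmodType K) (nE : E -> K) (T : completeNormedModType K) (tens : E -> E -> T).
Hypothesis hT : is_proj_tensor nE tens.

Lemma tens_linl f : islinear (fun e => tens e f).
Proof. by case: hT => [[_ h]] _ _; apply: h. Qed.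
Lemma tens_linr e : islinear (tens e).
Proof. by case: hT => [[h _]] _ _; apply: h. Qed.
Lemma tens_bnd e f : `|tens e f| <= nE e * nE f.
Proof. by case: hT => _ h _; apply: h. Qed.

Lemma uniqT (Z : completeNormedModType K) (L1 L2 : T -> Z) :
  islinear L1 -> bounded_op Num.norm Num.norm L1 ->
  islinear L2 -> bounded_op Num.norm Num.norm L2 ->
  (forall e f, L1 (tens e f) = L2 (tens e f)) -> forall s, L1 s = L2 s.
Proof.
move=> l1 b1 l2 b2 h12.
have [M1 [M10 hM1]] := bnd_pos (fun u => normr_ge0 _) (fun u => normr_ge0 _) b1.
case: hT => _ _ /(_ Z (fun e f => L1 (tens e f)) M1).
case.
- split.
  + by move=> e c u v /=; rewrite (tens_linr e) (linD _ _ l1) (linZ _ _ l1).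
  + by move=> f c u v /=; rewrite (tens_linl f) (linD _ _ l1) (linZ _ _ l1).
- exact: M10.
- move=> e f; apply: (le_trans (hM1 _)); rewrite -mulrA; apply: ler_wpM2l => //.
  exact: tens_bnd.
move=> L [_ _ _ hu] s.
rewrite (hu L1 l1 b1 (fun e f => erefl)) (hu L2 l2 b2 (fun e f => esym (h12 e f))) //.
Qed.

Lemma linT (Z : completeNormedModType K) (beta : E -> E -> Z) (M : K) :
  bilinear_map beta -> 0 <= M -> (forall e f, `|beta e f| <= M * nE e * nE f) ->
  exists L : T -> Z, [/\ islinear L, (forall e f, L (tens e f) = beta e f) &
     (forall t, `|L t| <= M * `|t|)].
Proof.
move=> hb hM hn; case: hT => _ _ /(_ Z beta M hb hM hn) [L [h1 h2 h3 _]].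
by exists L; split.
Qed.

Lemma denseT (P : T -> Prop) (hP0 : P 0)
  (hPl : forall (c : K) s1 s2, P s1 -> P s2 -> P (c *: s1 + s2))
  (hPc : forall s, (forall e : K, 0 < e -> exists s', P s' /\ `|s - s'| < e) -> P s) :
  (forall e f, P (tens e f)) -> forall s, P s.
Proof.
move=> htP s.
pose Z := SPc hP0 hPl hPc.
pose beta (e f : E) : Z := MkS (asboolT (htP e f)).
have [L [lL hL bL]] : exists L : T -> Z, [/\ islinear L, (forall e f, L (tens e f) = beta e f) &
     (forall t, `|L t| <= 1 * `|t|)].
  apply: linT => //.
  - split.
    + move=> e c u v; apply: sv_inj => /=; exact: (tens_linr e).
    + move=> f c u v; apply: sv_inj => /=; exact: (tens_linl f).
  - by move=> e f; rewrite mul1r; exact: tens_bnd.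
have : sv (L s) = s.
  apply: (@uniqT T (fun t => sv (L t)) id).
  - by move=> c u v; rewrite lL.
  - by exists 1 => t; apply: bL.
  - by [].
  - by exists 1 => t; rewrite mul1r.
  - by move=> e f; rewrite hL.
move=> <-; exact: asboolW (sP (L s)).
Qed.

End Tens.

Section Alg.
Variable R : realType.
Local Notation K := (R[i]).
Variables (A X : completeNormedModType K) (mul : A -> A -> A) (lm : A -> X -> X) (rm : X -> A -> X).
Hypothesis hA : banach_algebra mul.
Hypothesis hX : banach_bimodule mul lm rm.
Local Notation U := (A * K)%type.
Local Notation um := (unit_mul mul).
Local Notation ul := (unit_lact lm).
Local Notation ur := (unit_ract rm).
Local Notation un := (@unit_norm R A).
Definition uone : U := (0, 1).
Definition emb (a : A) : U := (a, 0).

Lemma mul_r a : islinear (mul a). Proof. by case: hA => [[h _]] _ _. Qed.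
Lemma mul_l b : islinear (mul^~ b). Proof. by case: hA => [[_ h]] _ _. Qed.
Lemma mulA' a b c : mul a (mul b c) = mul (mul a b) c. Proof. by case: hA. Qed.
Lemma lm_r a : islinear (lm a). Proof. by case: hX => [[h _]] _ _ _ _. Qed.
Lemma lm_l x : islinear (lm^~ x). Proof. by case: hX => [[_ h]] _ _ _ _. Qed.
Lemma rm_r x : islinear (rm x). Proof. by case: hX => _ [h _] _ _ _. Qed.
Lemma rm_l a : islinear (rm^~ a). Proof. by case: hX => _ [_ h] _ _ _. Qed.
Lemma lm_bnd a x : `|lm a x| <= `|a| * `|x|. Proof. by case: hX. Qed.
Lemma rm_bnd x a : `|rm x a| <= `|x| * `|a|. Proof. by case: hX. Qed.
Lemma lmM a b x : lm (mul a b) x = lm a (lm b x). Proof. by case: hX => _ _ _ _ []. Qed.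
Lemma rmM x a b : rm x (mul a b) = rm (rm x a) b. Proof. by case: hX => _ _ _ _ []. Qed.
Lemma lmrm a x b : lm a (rm x b) = rm (lm a x) b. Proof. by case: hX => _ _ _ _ []. Qed.

Lemma mul0r' b : mul 0 b = 0. Proof. exact: lin0 (mul_l b). Qed.
Lemma mulr0' a : mul a 0 = 0. Proof. exact: lin0 (mul_r a). Qed.
Lemma lm0l x : lm 0 x = 0. Proof. exact: lin0 (lm_l x). Qed.
Lemma lm0r a : lm a 0 = 0. Proof. exact: lin0 (lm_r a). Qed.
Lemma rm0l a : rm 0 a = 0. Proof. exact: lin0 (rm_l a). Qed.
Lemma rm0r x : rm x 0 = 0. Proof. exact: lin0 (rm_r x). Qed.

Lemma ul_r u : islinear (ul u).
Proof.
move=> c x y; rewrite /unit_lact (lm_r u.1) !scalerDr !scalerA mulrC.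
by rewrite addrACA.
Qed.
Lemma ul_l x : islinear (ul^~ x).
Proof.
move=> c u v; rewrite /unit_lact /= (lm_l x) scalerDl -scalerA scalerDr.
by rewrite addrACA.
Qed.
Lemma ur_r x : islinear (ur x).
Proof.
move=> c u v; rewrite /unit_ract /= (rm_r x) scalerDl -scalerA scalerDr.
by rewrite addrACA.
Qed.
Lemma ur_l u : islinear (ur^~ u).
Proof.
move=> c x y; rewrite /unit_ract (rm_l u.1) !scalerDr !scalerA mulrC.
by rewrite addrACA.
Qed.

Lemma lmD a x y : lm a (x + y) = lm a x + lm a y. Proof. exact: linD (lm_r a). Qed.
Lemma lmZ a c x : lm a (c *: x) = c *: lm a x. Proof. exact: linZ (lm_r a). Qed.
Lemma lmDl a b x : lm (a + b) x = lm a x + lm b x. Proof. exact: (linD _ _ (lm_l x)). Qed.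
Lemma lmZl a c x : lm (c *: a) x = c *: lm a x. Proof. exact: (linZ _ _ (lm_l x)). Qed.
Lemma rmD x y a : rm (x + y) a = rm x a + rm y a. Proof. exact: (linD _ _ (rm_l a)). Qed.
Lemma rmZ c x a : rm (c *: x) a = c *: rm x a. Proof. exact: (linZ _ _ (rm_l a)). Qed.
Lemma rmDr x a b : rm x (a + b) = rm x a + rm x b. Proof. exact: linD (rm_r x). Qed.
Lemma rmZr x c a : rm x (c *: a) = c *: rm x a. Proof. exact: linZ (rm_r x). Qed.

Lemma ul_assoc u v x : ul u (ul v x) = ul (um u v) x.
Proof.
rewrite /unit_lact /unit_mul /= lmD lmZ !lmDl !lmZl lmM !scalerDr !scalerA.
by rewrite addrA; congr (_ + _); rewrite addrAC.
Qed.

Lemma ur_assoc x u v : ur (ur x u) v = ur x (um u v).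
Proof.
rewrite /unit_ract /unit_mul /= rmD rmZ !rmDr !rmZr rmM !scalerDr !scalerA.
by rewrite [v.2 * u.2]mulrC !addrA.
Qed.

Lemma ulr u x v : ul u (ur x v) = ur (ul u x) v.
Proof.
rewrite /unit_ract /unit_lact /= lmD lmZ rmD rmZ !scalerDr !scalerA.
rewrite lmrm [v.2 * u.2]mulrC !addrA; congr (_ + _).
by rewrite addrAC -!addrA; congr (_ + _); rewrite addrC.
Qed.

Lemma ul1 x : ul uone x = x.
Proof. by rewrite /unit_lact /= lm0l add0r scale1r. Qed.
Lemma ur1 x : ur x uone = x.
Proof. by rewrite /unit_ract /= rm0r add0r scale1r. Qed.
Lemma ul_emb a x : ul (emb a) x = lm a x.
Proof. by rewrite /unit_lact /= scale0r addr0. Qed.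
Lemma ur_emb x a : ur x (emb a) = rm x a.
Proof. by rewrite /unit_ract /= scale0r addr0. Qed.

Lemma un_ge0 u : 0 <= un u.
Proof. by rewrite /unit_norm addr_ge0. Qed.

Lemma ul_bnd u x : `|ul u x| <= un u * `|x|.
Proof.
rewrite /unit_lact /unit_norm mulrDl (le_trans (ler_normD _ _)) // lerD //.
  exact: lm_bnd.
by rewrite normrZ.
Qed.
Lemma ur_bnd x u : `|ur x u| <= `|x| * un u.
Proof.
rewrite /unit_ract /unit_norm mulrDr (le_trans (ler_normD _ _)) // lerD //.
  exact: rm_bnd.
by rewrite normrZ mulrC.
Qed.

Lemma um_1 u : um u uone = u.
Proof. by rewrite /unit_mul /= mulr0' scaler0 addr0 scale1r add0r mulr1; case: u. Qed.

Lemma un_N u : un (- u) = un u.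
Proof. by rewrite /unit_norm /= !normrN. Qed.

End Alg.

Section Small.
Variable R : realType.
Local Notation K := (R[i]).

Lemma eq0_small (u : K) : 0 <= u -> (forall e : K, 0 < e -> u < e) -> u = 0.
Proof.
rewrite le0r => /orP [/eqP //|u0] h.
have two0 : (0 : K) < 2%:R by rewrite ltr0n.
have := h (u / 2%:R) (divr_gt0 u0 two0).
by rewrite ltr_pdivlMr // mulr_natr mulr2n gtrDl => /(lt_trans u0); rewrite ltxx.
Qed.

Lemma eq_small (V : normedModType K) (u v : V) : (forall e : K, 0 < e -> `|u - v| < e) -> u = v.
Proof.
by move=> h; apply/eqP; rewrite -subr_eq0 -normr_eq0; apply/eqP; apply: eq0_small.
Qed.

Lemma le_small (u B : K) : 0 <= u -> 0 <= B -> (forall e : K, 0 < e -> u < B + e) -> u <= B.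
Proof.
move=> u0 B0 h; have ur : u \is Num.real by apply: ger0_real.
have Br : B \is Num.real by apply: ger0_real.
rewrite real_leNgt //; apply/negP => Bu.
have := h (u - B); rewrite subr_gt0 => /(_ Bu); rewrite addrC subrK ltxx //.
Qed.

Variables (Lam : Type) (le : Lam -> Lam -> Prop).
Hypothesis hdir : directed le.

Let le_refl l : le l l. Proof. by case: hdir. Qed.
Let le_trans' a b c : le a b -> le b c -> le a c. Proof. by case: hdir => _ _ h _; apply: h. Qed.
Let le_up a b : exists c, le a c /\ le b c. Proof. by case: hdir => _ _ _ h; apply: h. Qed.

Lemma small_add (f g : Lam -> K) : net_to0 le f -> net_to0 le g -> net_to0 le (fun l => f l + g l).
Proof.
move=> hf hg e e0; have e2 : 0 < e / 2%:R by apply: divr_gt0; rewrite // ltr0n.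
have [l1 h1] := hf _ e2; have [l2 h2] := hg _ e2; have [l3 [a b]] := le_up l1 l2.
exists l3 => l hl; rewrite [e]splitr ltrD //.
  by apply: h1; apply: le_trans' hl.
by apply: h2; apply: le_trans' hl.
Qed.

Lemma small_le (f g : Lam -> K) : (forall l, g l <= f l) -> net_to0 le f -> net_to0 le g.
Proof.
move=> h hf e e0; have [l0 h0] := hf e e0; exists l0 => l hl.
exact: le_lt_trans (h l) (h0 l hl).
Qed.

Lemma small_mul (c : K) (f : Lam -> K) : 0 <= c -> (forall l, 0 <= f l) ->
  net_to0 le f -> net_to0 le (fun l => c * f l).
Proof.
move=> c0 f0 hf e e0; have c1 : 0 < c + 1 by apply: ltr_wpDl.
have [l0 h0] := hf (e / (c + 1)) (divr_gt0 e0 c1); exists l0 => l hl.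
apply: (le_lt_trans (y := (c + 1) * f l)).
  by apply: ler_wpM2r => //; rewrite lerDl.
by rewrite mulrC -ltr_pdivlMr //; apply: h0.
Qed.

Lemma small_pick (f g : Lam -> K) : net_to0 le f -> net_to0 le g ->
  forall e : K, 0 < e -> exists l, f l < e /\ g l < e.
Proof.
move=> hf hg e e0; have [l1 h1] := hf _ e0; have [l2 h2] := hg _ e0.
have [l3 [a b]] := le_up l1 l2; exists l3; split; [exact: h1 | exact: h2].
Qed.

Lemma small_eps (f : Lam -> K) (C : K) : 0 <= C ->
  (forall eta : K, 0 < eta -> exists g : Lam -> K, net_to0 le g /\ forall l, f l <= C * eta + g l) ->
  net_to0 le f.
Proof.
move=> C0 h e e0.
have two0 : (0 : K) < 2%:R by rewrite ltr0n.
have e2 : 0 < e / 2%:R by apply: divr_gt0.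
have C1 : 0 < C + 1 by apply: ltr_wpDl.
have [g [hg hf]] := h _ (divr_gt0 e2 C1).
have [l0 h0] := hg _ e2; exists l0 => l hl.
apply: le_lt_trans (hf l) _; apply: (lt_le_trans (y := e / 2%:R + e / 2%:R)); last by rewrite -splitr.
rewrite ler_ltD //; last exact: h0.
apply: (le_trans (y := (C + 1) * (e / 2%:R / (C + 1)))).
  by apply: ler_wpM2r; [apply: ltW; apply: divr_gt0 | rewrite lerDl ler01].
by rewrite mulrC divfK // gt_eqF.
Qed.

Lemma small_const (u : K) (f : Lam -> K) : (forall l, u <= f l) -> net_to0 le f ->
  forall e : K, 0 < e -> u < e.
Proof.
move=> h hf e e0; have [l0 h0] := hf _ e0.
exact: le_lt_trans (h l0) (h0 l0 (le_refl l0)).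
Qed.

Lemma small_bound (u B : K) (f : Lam -> K) : 0 <= u -> 0 <= B ->
  (forall l, u <= B + f l) -> net_to0 le f -> u <= B.
Proof.
move=> u0 B0 h hf; apply: le_small => // e e0; have [l0 h0] := hf _ e0.
by apply: le_lt_trans (h l0) _; rewrite ltrD2l; apply: h0 (le_refl l0).
Qed.

Lemma small_eq (V : normedModType K) (x y : V) (f : Lam -> K) :
  (forall l, `|x - y| <= f l) -> net_to0 le f -> x = y.
Proof. by move=> h hf; apply: eq_small => e e0; apply: small_const h hf e e0. Qed.

Definition le2 (p q : Lam * Lam) := le p.1 q.1 /\ le p.2 q.2.

Lemma dir2 : directed le2.
Proof.
case: hdir => [[l0] hr ht hu]; split.
- by constructor; exact: (l0, l0).
- by move=> l; split.
- by move=> a b c [h1 h2] [h3 h4]; split; [apply: ht h3|apply: ht h4].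
- move=> a b; have [c1 [x1 y1]] := hu a.1 b.1; have [c2 [x2 y2]] := hu a.2 b.2.
  by exists (c1, c2); split; split.
Qed.

Lemma small_fst (f : Lam -> K) : net_to0 le f -> net_to0 le2 (fun p => f p.1).
Proof.
move=> hf e e0; have [l0 h0] := hf e e0; exists (l0, l0) => p [h _]; exact: h0.
Qed.
Lemma small_snd (f : Lam -> K) : net_to0 le f -> net_to0 le2 (fun p => f p.2).
Proof.
move=> hf e e0; have [l0 h0] := hf e e0; exists (l0, l0) => p [_ h]; exact: h0.
Qed.

Lemma small2_cauchy (X : normedModType K) (z : Lam -> X) :
  net_to0 le2 (fun p => `|z p.1 - z p.2|) ->
  forall e : K, 0 < e -> exists l0, forall l m, le l0 l -> le l0 m -> `|z l - z m| < e.
Proof.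
move=> h e e0; have [[a b] hab] := h e e0; have [c [ac bc]] := le_up a b.
exists c => l m cl cm; apply: (hab (l, m)); split; [exact: le_trans' cl|exact: le_trans' cm].
Qed.

End Small.

Section Main.
Variable R : realType.
Local Notation K := (R[i]).
Variables (A X T : completeNormedModType R[i])
  (mul : A -> A -> A) (lm : A -> X -> X) (rm : X -> A -> X)
  (hA : banach_algebra mul) (hX : banach_bimodule mul lm rm)
  (tens : A * R[i] -> A * R[i] -> T)
  (hT : is_proj_tensor (@unit_norm R A) tens)
  (lact : A * R[i] -> T -> T)
  (hlact : forall u, [/\ islinear (lact u), bounded_op Num.norm Num.norm (lact u) &
             forall v w, lact u (tens v w) = tens (unit_mul mul u v) w])
  (ract : A * R[i] -> T -> T)
  (hract : forall u, [/\ islinear (ract u), bounded_op Num.norm Num.norm (ract u) &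
             forall v w, ract u (tens v w) = tens v (unit_mul mul w u)])
  (flip : T -> T)
  (hflip : [/\ islinear flip, bounded_op Num.norm Num.norm flip &
             forall v w, flip (tens v w) = tens w v])
  (pi : T -> A * R[i])
  (hpi : [/\ islinear pi, bounded_op Num.norm (@unit_norm R A) pi &
             forall v w, pi (tens v w) = unit_mul mul v w])
  (psi : X -> T -> X)
  (hpsi : forall x, [/\ islinear (psi x), bounded_op Num.norm Num.norm (psi x) &
             forall v w, psi x (tens v w) = unit_ract rm (unit_lact lm v x) w])
  (D : A -> X)
  (hD : is_lie_derivation mul lm rm D) (hDb : bounded_op Num.norm Num.norm D)
  (Phi : T -> X)
  (hPhi : [/\ islinear Phi, bounded_op Num.norm Num.norm Phi &
             forall v w, Phi (tens v w) = unit_lact lm v (D w.1)]).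

Local Notation U := (A * K)%type.
Local Notation um := (unit_mul mul).
Local Notation ul := (unit_lact lm).
Local Notation ur := (unit_ract rm).
Local Notation un := (@unit_norm R A).

Let lact_lin u : islinear (lact u). Proof. by case: (hlact u). Qed.
Let lact_bnd u : bounded_op Num.norm Num.norm (lact u). Proof. by case: (hlact u). Qed.
Let lact_t u v w : lact u (tens v w) = tens (um u v) w. Proof. by case: (hlact u). Qed.
Let ract_lin u : islinear (ract u). Proof. by case: (hract u). Qed.
Let ract_bnd u : bounded_op Num.norm Num.norm (ract u). Proof. by case: (hract u). Qed.
Let ract_t u v w : ract u (tens v w) = tens v (um w u). Proof. by case: (hract u). Qed.
Let flip_lin : islinear flip. Proof. by case: hflip. Qed.
Let flip_bnd : bounded_op Num.norm Num.norm flip. Proof. by case: hflip. Qed.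
Let flip_t v w : flip (tens v w) = tens w v. Proof. by case: hflip. Qed.
Let pi_lin : islinear pi. Proof. by case: hpi. Qed.
Let pi_bnd : bounded_op Num.norm un pi. Proof. by case: hpi. Qed.
Let pi_t v w : pi (tens v w) = um v w. Proof. by case: hpi. Qed.
Let psi_lin x : islinear (psi x). Proof. by case: (hpsi x). Qed.
Let psi_bnd x : bounded_op Num.norm Num.norm (psi x). Proof. by case: (hpsi x). Qed.
Let psi_t x v w : psi x (tens v w) = ur (ul v x) w. Proof. by case: (hpsi x). Qed.
Let Phi_lin : islinear Phi. Proof. by case: hPhi. Qed.
Let Phi_bnd : bounded_op Num.norm Num.norm Phi. Proof. by case: hPhi. Qed.
Let Phi_t v w : Phi (tens v w) = ul v (D w.1). Proof. by case: hPhi. Qed.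
Let D_lin : islinear D. Proof. by case: hD. Qed.

Definition DD (u : U) := D u.1.

Lemma DD_lin : islinear DD.
Proof. by move=> c u v; rewrite /DD /= D_lin. Qed.

Lemma lieU u v : DD (um u v - um v u) = ur (DD u) v + ul u (DD v) - ur (DD v) u - ul v (DD u).
Proof.
rewrite /DD /unit_mul /=.
have -> : mul u.1 v.1 + u.2 *: v.1 + v.2 *: u.1 - (mul v.1 u.1 + v.2 *: u.1 + u.2 *: v.1)
   = mul u.1 v.1 - mul v.1 u.1.
  set a := mul u.1 v.1; set b := u.2 *: v.1; set c := v.2 *: u.1; set d := mul v.1 u.1.
  rewrite -[d + c + b]addrA [c + b]addrC [d + _]addrC opprD addrA -[a + b + c]addrA.
  by rewrite addrK.
case: hD => _ ->.
rewrite /unit_ract /unit_lact.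
set P := rm _ v.1; set Q := lm u.1 _; set S := rm _ u.1; set T0 := lm v.1 _.
set e1 := v.2 *: _; set e2 := u.2 *: _.
rewrite [- (T0 + e1)]opprD !addrA [S + e2]addrC opprD addrA addrK [_ - T0 - e1]addrAC [_ - S - e1]addrAC.
by rewrite [P + e1 + Q - e1]addrAC addrK.
Qed.


Let nn (V : normedModType K) (v : V) : 0 <= `|v|. Proof. exact: normr_ge0. Qed.
Let bndc (E F G : normedModType K) (f : F -> G) (g : E -> F) :
  bounded_op Num.norm Num.norm f -> bounded_op Num.norm Num.norm g ->
  bounded_op Num.norm Num.norm (fun t => f (g t)).
Proof. by move=> bf bg; apply: (bnd_comp (nF := Num.norm)) => //; exact: nn. Qed.
Let b_ul u : bounded_op Num.norm Num.norm (ul u).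
Proof. by exists (un u) => y; have := ul_bnd hX u y. Qed.
Let b_ur u : bounded_op Num.norm Num.norm (ur^~ u).
Proof. by exists (un u) => y; rewrite mulrC; exact: (ur_bnd hX _ _). Qed.
Let b_ulx x : bounded_op un Num.norm (ul^~ x).
Proof. by exists `|x| => u; rewrite mulrC; exact: (ul_bnd hX _ _). Qed.
Let l_ul u : islinear (ul u). Proof. by have := ul_r hX u. Qed.
Let l_ur u : islinear (ur^~ u). Proof. by have := ur_l hX u. Qed.
Let l_ulx x : islinear (ul^~ x). Proof. by have := ul_l hX x. Qed.
Let l_urx x : islinear (ur x). Proof. by have := ur_r hX x. Qed.

Lemma psi_norm x t : `|psi x t| <= `|x| * `|t|.
Proof.
have bil : bilinear_map (fun u v => ur (ul u x) v).
  split => [u|v]; first exact: l_urx.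
  exact: (lin_comp (l_ur v) (l_ulx x)).
have hb : forall u v, `|ur (ul u x) v| <= `|x| * un u * un v.
  move=> u v; apply: (le_trans (ur_bnd hX _ _)).
  apply: ler_wpM2r; first exact: un_ge0.
  by rewrite mulrC; have := ul_bnd hX u x.
have [L [lL hL bL]] := linT hT bil (nn x) hb.
have -> : psi x t = L t.
  apply: (uniqT hT (L1 := psi x) (L2 := L)) => //.
    by exists `|x| => s; apply: bL.
  by move=> e f; rewrite psi_t hL.
exact: bL.
Qed.

Lemma psiD x y t : psi (x + y) t = psi x t + psi y t.
Proof.
apply: (uniqT hT (L1 := psi (x + y)) (L2 := fun t => psi x t + psi y t)) => //; first exact: lin_add.
  by apply: bnd_add => //; exact: nn.
by move=> u v; rewrite !psi_t (linD _ _ (l_ul u)) (linD _ _ (l_ur v)).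
Qed.

Lemma psiB x y t : psi (x - y) t = psi x t - psi y t.
Proof.
apply: (uniqT hT (L1 := psi (x - y)) (L2 := fun t => psi x t - psi y t)) => //; first exact: lin_sub.
  by apply: bnd_sub => //; exact: nn.
by move=> u v; rewrite !psi_t (linB _ _ (l_ul u)) (linB _ _ (l_ur v)).
Qed.

Lemma ul_psi u x t : ul u (psi x t) = psi x (lact u t).
Proof.
apply: (uniqT hT (L1 := fun t => ul u (psi x t)) (L2 := fun t => psi x (lact u t))).
- exact: lin_comp.
- by apply: bndc.
- exact: lin_comp.
- by apply: bndc.
by move=> v w; rewrite lact_t !psi_t (ulr hX) (ul_assoc hX).
Qed.

Lemma ur_psi u x t : ur (psi x t) u = psi x (ract u t).
Proof.
apply: (uniqT hT (L1 := fun t => ur (psi x t) u) (L2 := fun t => psi x (ract u t))).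
- exact: (lin_comp (l_ur u) (psi_lin x)).
- exact: (bndc (b_ur u) (psi_bnd x)).
- exact: lin_comp.
- by apply: bndc.
by move=> v w; rewrite ract_t !psi_t (ur_assoc hX).
Qed.

Lemma Phi_lact a t : Phi (lact (emb a) t) = lm a (Phi t).
Proof.
rewrite -ul_emb.
apply: (uniqT hT (L1 := fun t => Phi (lact (emb a) t)) (L2 := fun t => ul (emb a) (Phi t))).
- exact: lin_comp.
- by apply: bndc.
- exact: lin_comp.
- by apply: bndc.
by move=> v w; rewrite lact_t !Phi_t (ul_assoc hX).
Qed.


Lemma zm1 (V : zmodType) (Y A0 p B q C : V) : p - q = Y + B - C - A0 -> Y = A0 + p - B - q + C.
Proof.
move=> h.
have -> : A0 + p - B - q = p - q + A0 - B.
  by rewrite [A0 + p]addrC [p + A0 - B - q]addrAC [p + A0 - q]addrAC.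
by rewrite h subrK [Y + B - C - B]addrAC addrK subrK.
Qed.

Lemma main_id a t : psi (D a) t = ul (pi t) (D a) + Phi (flip (lact (emb a) (flip t)))
  - Phi (flip (ract (emb a) (flip t))) - Phi (ract (emb a) t) + ur (Phi t) (emb a).
Proof.
set x := D a; set al := emb a.
apply: (uniqT hT (L1 := psi x) (L2 := fun t => ul (pi t) x + Phi (flip (lact al (flip t)))
  - Phi (flip (ract al (flip t))) - Phi (ract al t) + ur (Phi t) al)) => //.
- apply: lin_add; last exact: (lin_comp (l_ur al) Phi_lin).
  apply: lin_sub; last exact: (lin_comp Phi_lin (ract_lin al)).
  apply: lin_sub; last first.
    exact: (lin_comp Phi_lin (lin_comp flip_lin (lin_comp (ract_lin al) flip_lin))).
  apply: lin_add; last first.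
    exact: (lin_comp Phi_lin (lin_comp flip_lin (lin_comp (lact_lin al) flip_lin))).
  exact: (lin_comp (l_ulx x) pi_lin).
- apply: bnd_add => //; last exact: (bndc (b_ur al) Phi_bnd).
  apply: bnd_sub => //; last exact: (bndc Phi_bnd (ract_bnd al)).
  apply: bnd_sub => //; last first.
    exact: (bndc Phi_bnd (bndc flip_bnd (bndc (ract_bnd al) flip_bnd))).
  apply: bnd_add => //; last first.
    exact: (bndc Phi_bnd (bndc flip_bnd (bndc (lact_bnd al) flip_bnd))).
  exact: (bnd_comp (nF := un) (fun u => nn u) (fun u => un_ge0 u) (fun u => nn u) (b_ulx x) pi_bnd).
move=> u v; rewrite !flip_t lact_t ract_t !flip_t ract_t !Phi_t psi_t pi_t.
apply: zm1.
have := lieU al v; rewrite /DD => hl.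
rewrite -(linB _ _ (l_ul u)) -(linB _ _ D_lin).
rewrite -[(um al v).1 - _]/((um al v - um v al).1) hl /=.
rewrite !(linB _ _ (l_ul u)) (linD _ _ (l_ul u)) !(ulr hX) !(ul_assoc hX) //.
Qed.

Lemma II y a t : psi (rm y a - lm a y) t = psi y (flip (lact (emb a) (flip t)))
  - psi y (flip (ract (emb a) (flip t))).
Proof.
set al := emb a.
apply: (uniqT hT (L1 := psi (rm y a - lm a y)) (L2 := fun t => psi y (flip (lact al (flip t)))
  - psi y (flip (ract al (flip t))))) => //.
- apply: lin_sub.
    exact: (lin_comp (psi_lin y) (lin_comp flip_lin (lin_comp (lact_lin al) flip_lin))).
  exact: (lin_comp (psi_lin y) (lin_comp flip_lin (lin_comp (ract_lin al) flip_lin))).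
- apply: bnd_sub => //.
    exact: (bndc (psi_bnd y) (bndc flip_bnd (bndc (lact_bnd al) flip_bnd))).
  exact: (bndc (psi_bnd y) (bndc flip_bnd (bndc (ract_bnd al) flip_bnd))).
move=> u v; rewrite !flip_t lact_t ract_t !flip_t !psi_t.
rewrite -(ur_emb rm y a) -(ul_emb lm a y) -/al.
rewrite (linB _ _ (l_ul u)) (linB _ _ (l_ur v)) (ulr hX) (ul_assoc hX) (ur_assoc hX) //.
Qed.


Variables (Lam : Type) (le : Lam -> Lam -> Prop) (t : Lam -> T)
  (hLam : directed le)
  (hsym : forall l, flip (t l) = t l)
  (hdiag : forall u, net_to0 le (fun l => `|lact u (t l) - ract u (t l)|))
  (hunit : forall u, net_to0 le (fun l => unit_norm (unit_mul mul (pi (t l)) u - u)))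
  (hpsib : forall x, net_bounded Num.norm (fun l => psi x (t l)))
  (hPhib : net_bounded Num.norm (fun l => Phi (t l))).

Definition delta a s := lact (emb a) s - ract (emb a) s.
Definition zz a l := psi (D a) (t l).
Definition yy a l := rm (Phi (t l)) a - lm a (Phi (t l)).
Definition qq a l := ul (pi (t l) - (uone A)) (D a) + (Phi (flip (delta a (t l))) + Phi (delta a (t l))).


Lemma small_pi : net_to0 le (fun l => un (pi (t l) - (uone A))).
Proof.
move=> e e0; have [l1 h] := hunit (uone A) e0; exists l1 => l hl.
by have := h l hl; rewrite (um_1 hA).
Qed.

Lemma small_delta a : net_to0 le (fun l => `|delta a (t l)|).
Proof. exact: hdiag. Qed.

Lemma zm2 (V : zmodType) (P1 A1 B1 C1 Rr Lm : V) :
  P1 + A1 - B1 - C1 + Rr = P1 + (Rr - Lm) + ((A1 - B1) + (Lm - C1)).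
Proof.
rewrite [Lm - C1]addrC addrA [_ + Lm]addrC addrA.
rewrite [P1 + (Rr - Lm) + (A1 - B1) + Lm]addrAC [P1 + (Rr - Lm)]addrA subrK.
by rewrite [P1 + Rr + _]addrAC [P1 + (A1 - B1) + Rr - C1]addrAC addrA.
Qed.

Lemma zz_dec a l : zz a l = D a + qq a l + yy a l.
Proof.
rewrite /zz main_id hsym /qq /yy /delta.
rewrite (linB _ _ flip_lin) !(linB _ _ Phi_lin) Phi_lact ur_emb.
rewrite (linB _ _ (l_ulx (D a))) (ul1 hX).
rewrite (@zm2 _ _ _ _ _ _ (lm a (Phi (t l)))).
set U1 := ul _ _; set Y := rm _ _ - _; set Q := (_ - _) + (_ - _).
by rewrite [D a + _]addrA [D a + (U1 - D a)]addrC subrK addrAC.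
Qed.

Lemma small_q a : net_to0 le (fun l => `|qq a l|).
Proof.
have [MP [MP0 hMP]] := bnd_pos (fun _ => normr_ge0 _) (fun _ => normr_ge0 _) Phi_bnd.
have [Mf [Mf0 hMf]] := bnd_pos (fun _ => normr_ge0 _) (fun _ => normr_ge0 _) flip_bnd.
apply: (small_le (f := fun l => `|D a| * un (pi (t l) - uone A) +
   ((MP * Mf) * `|delta a (t l)| + MP * `|delta a (t l)|))).
- move=> l; rewrite /qq; apply: le_trans (ler_normD _ _) _; apply: lerD.
    by rewrite mulrC; exact: (ul_bnd hX _ _).
  apply: le_trans (ler_normD _ _) _; apply: lerD; last exact: hMP.
  apply: le_trans (hMP _) _; rewrite -mulrA; apply: ler_wpM2l => //.
- apply: small_add => //.
    apply: small_mul; [exact: normr_ge0 | move=> l; exact: un_ge0 | exact: small_pi].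
  apply: small_add => //; apply: small_mul;
    [exact: mulr_ge0 | move=> l; exact: normr_ge0 | exact: small_delta |
     exact: MP0 | move=> l; exact: normr_ge0 | exact: small_delta].
Qed.

Definition GG s z := psi z s - ur z (pi s).

Lemma zm4 (V : lmodType K) (c : K) (a1 a2 b1 b2 : V) :
  c *: a1 + a2 - (c *: b1 + b2) = c *: (a1 - b1) + (a2 - b2).
Proof. by rewrite scalerBr opprD addrACA. Qed.

Lemma GG_lin z c s1 s2 : GG (c *: s1 + s2) z = c *: GG s1 z + GG s2 z.
Proof. by rewrite /GG (psi_lin z) pi_lin (l_urx z) zm4. Qed.

Lemma GG_split z s s' : GG s z = GG s' z + GG (s - s') z.
Proof.
have := GG_lin z 1 (s - s') s'; rewrite scale1r subrK => ->.
by rewrite scale1r addrC.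
Qed.

Lemma GG_bnd z s (Mpi : K) : 0 <= Mpi -> (forall s, un (pi s) <= Mpi * `|s|) ->
  `|GG s z| <= (`|z| + `|z| * Mpi) * `|s|.
Proof.
move=> M0 hM; rewrite /GG; apply: le_trans (ler_normB _ _) _.
rewrite mulrDl; apply: lerD; first exact: psi_norm.
apply: le_trans (ur_bnd hX _ _) _; rewrite -mulrA; apply: ler_wpM2l => //.
Qed.

Lemma GG_tens z u v : GG (tens u v) z = ur (ul u z - ur z u) v.
Proof. by rewrite /GG psi_t pi_t -(ur_assoc hX) (linB _ _ (l_ur v)). Qed.

Lemma swap a s : net_to0 le (fun l => `|GG s (zz a l)|).
Proof.
have [Kz hKz] := hpsib (D a).
have [Mpi [Mpi0 hMpi]] := bnd_pos (fun u => un_ge0 u) (fun _ => normr_ge0 _) pi_bnd.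
have Kz0 : 0 <= Kz by case: hLam => [[l]] _ _ _; apply: le_trans (hKz l).
move: s; apply: (denseT hT (P := fun s => net_to0 le (fun l => `|GG s (zz a l)|))).
- move=> e e0; case: hLam => [[l0]] _ _ _; exists l0 => l _.
  by rewrite /GG (lin0 (psi_lin _)) (lin0 pi_lin) (lin0 (l_urx _)) subrr normr0.
- move=> c s1 s2 h1 h2.
  apply: (small_le (f := fun l => `|c| * `|GG s1 (zz a l)| + `|GG s2 (zz a l)|)).
    by move=> l; rewrite GG_lin; apply: le_trans (ler_normD _ _) _; rewrite normrZ.
  apply: small_add => //; apply: small_mul => //; move=> l; exact: normr_ge0.
- move=> s hs e e0.
  set C := Kz + Kz * Mpi.
  have C0 : 0 <= C by apply: addr_ge0 => //; apply: mulr_ge0.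
  have C1 : 0 < C + 1 by apply: ltr_wpDl.
  have two0 : (0 : K) < 2%:R by rewrite ltr0n.
  have e2 : 0 < e / 2%:R by apply: divr_gt0.
  have [s' [Ps' hss']] := hs _ (divr_gt0 e2 C1).
  have [l1 h1] := Ps' _ e2.
  exists l1 => l hl; rewrite (GG_split _ s s') [e]splitr.
  apply: le_lt_trans (ler_normD _ _) _; rewrite ltrD //; first exact: h1.
  apply: le_lt_trans (GG_bnd (zz a l) (s - s') Mpi0 hMpi) _.
  apply: (le_lt_trans (y := (C + 1) * `|s - s'|)).
    apply: ler_wpM2r; first exact: normr_ge0.
    apply: (le_trans (y := C)); last by rewrite lerDl ler01.
    apply: lerD; first exact: hKz.
    by apply: ler_wpM2r => //; exact: hKz.
  by rewrite mulrC -ltr_pdivlMr.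
- move=> u v.
  apply: (small_le (f := fun l => (`|D a| * un v) * `|lact u (t l) - ract u (t l)|)).
    move=> l; rewrite GG_tens; apply: le_trans (ur_bnd hX _ _) _.
    rewrite /zz (ul_psi u) (ur_psi u) -(linB _ _ (psi_lin _)) mulrAC; apply: ler_wpM2r; first exact: un_ge0.
    exact: psi_norm.
  apply: small_mul; [apply: mulr_ge0; [exact: normr_ge0 | exact: un_ge0] |
    move=> l; exact: normr_ge0 | exact: hdiag].
Qed.

Lemma zm7 (V : zmodType) (x ql yl qm ym : V) : x + ql + yl - (x + qm + ym) = ql - qm + (yl - ym).
Proof. by rewrite opprD addrACA opprD [x + ql + _]addrACA subrr add0r. Qed.
Lemma zm5 (V : zmodType) (a1 a2 b1 b2 : V) : a1 - a2 - (b1 - b2) = a1 - b1 - (a2 - b2).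
Proof. by rewrite !opprB addrACA [RHS]addrACA [- b1 - a2]addrC. Qed.
Lemma tele (V : zmodType) (a b c : V) : a = (a - b) + (b - c) + c.
Proof. by rewrite addrA subrK subrK. Qed.

Lemma zz_cauchy a : net_to0 (le2 le) (fun p => `|zz a p.1 - zz a p.2|).
Proof.
have [Kz hKz] := hpsib (D a).
have [KP hKP] := hPhib.
have [Mf [Mf0 hMf]] := bnd_pos (fun _ => normr_ge0 _) (fun _ => normr_ge0 _) flip_bnd.
have [Kz0 KP0] : 0 <= Kz /\ 0 <= KP.
  by case: hLam => [[l]] _ _ _; split; [apply: le_trans (hKz l) | apply: le_trans (hKP l)].
apply: (small_eps (C := Kz + Kz + (KP + KP) * Mf)).
  by apply: addr_ge0; [apply: addr_ge0 | apply: mulr_ge0 => //; apply: addr_ge0].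
move=> eta eta0.
have [nu [h1 h2]] := small_pick hLam small_pi (small_delta a) eta0.
set s := t nu.
exists (fun p => `|GG s (zz a p.1)| + `|GG s (zz a p.2)| + `|s| * (`|qq a p.1| + `|qq a p.2|)).
split.
  apply: small_add; first exact: dir2.
    apply: small_add; first exact: dir2.
      exact: (small_fst (swap a s)).
    exact: (small_snd (swap a s)).
  apply: small_mul; [exact: normr_ge0 | move=> p; apply: addr_ge0; exact: normr_ge0 |].
  apply: small_add; first exact: dir2.
    exact: (small_fst (small_q a)).
  exact: (small_snd (small_q a)).
case=> l m /=.
set zl := zz a l; set zm := zz a m; set w := zl - zm; set p := pi s.
have hw : `|w| <= Kz + Kz.
  by rewrite /w; apply: le_trans (ler_normB _ _) _; apply: lerD; [exact: hKz | exact: hKz].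
have T1 : `|w - ur w p| <= (Kz + Kz) * eta.
  have -> : w - ur w p = ur w (uone A - p) by rewrite (linB _ _ (l_urx w)) (ur1 hX).
  rewrite -opprB.
  apply: le_trans (ur_bnd hX _ _) _; rewrite un_N.
  by apply: ler_pM; rewrite ?normr_ge0 ?un_ge0 //; exact: ltW.
have T2 : `|ur w p - psi w s| <= `|GG s zl| + `|GG s zm|.
  rewrite /w (linB _ _ (l_ur p)) psiB zm5; apply: le_trans (ler_normB _ _) _.
  by rewrite /GG !(distrC (ur _ p)).
have T3 : `|psi w s| <= `|s| * (`|qq a l| + `|qq a m|) + (KP + KP) * Mf * eta.
  rewrite /w /zl /zm !zz_dec zm7 psiD; apply: le_trans (ler_normD _ _) _.
  apply: lerD.
    apply: le_trans (psi_norm _ _) _; rewrite mulrC; apply: ler_wpM2l; first exact: normr_ge0.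
    exact: ler_normB.
  set Y := Phi (t l) - Phi (t m).
  have -> : yy a l - yy a m = rm Y a - lm a Y.
    by rewrite /yy /Y (linB _ _ (rm_l hX a)) (linB _ _ (lm_r hX a)) zm5.
  rewrite II /s hsym -(linB _ _ (psi_lin Y)) -(linB _ _ flip_lin) -/(delta a (t nu)).
  apply: le_trans (psi_norm _ _) _; rewrite -mulrA; apply: ler_pM; 
    [exact: normr_ge0 | exact: normr_ge0 | by apply: le_trans (ler_normB _ _) _; apply: lerD |].
  apply: le_trans (hMf _) _; apply: ler_wpM2l => //; exact: ltW.
rewrite {1}(tele w (ur w p) (psi w s)).
apply: le_trans (ler_normD _ _) _; apply: le_trans (lerD (ler_normD _ _) (lexx _)) _.
apply: le_trans (lerD (lerD T1 T2) T3) _.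
by rewrite le_eqVlt; apply/orP; left; apply/eqP; ring.
Qed.

Lemma zm8 (V : zmodType) (x tau L Rm q : V) : x - tau - (L - Rm) = x + q + (Rm - L) - tau - q.
Proof.
rewrite opprB [x + q + _]addrAC [x + (Rm - L) + q - tau]addrAC addrK.
by rewrite addrAC.
Qed.
Lemma zm9 (V : zmodType) (P Vv Q W S Tt : V) :
  (P + Vv) + (Q + W) - (S + W) - (Tt + Vv) - ((P + Q) - (S + Tt)) = 0.
Proof.
apply/eqP; rewrite subr_eq0; apply/eqP.
rewrite -addrA -opprD [(P + Vv) + _]addrACA [(S + W) + _]addrACA [W + Vv]addrC opprD.
by rewrite [(P + Q) + _ + _]addrACA subrr addr0.
Qed.
Lemma zm12 (V : zmodType) (X1 Y Z : V) : X1 - Z = (X1 - Y) - (Z - Y).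
Proof. by rewrite opprB addrA subrK. Qed.
Lemma zm13 (V : zmodType) (A1 B1 C1 D1 : V) : A1 - B1 = (A1 - C1) + (C1 - D1) - (B1 - D1).
Proof. by rewrite addrA subrK; exact: zm12. Qed.

Lemma main_result : exists (d tau : A -> X),
    [/\ is_derivation mul lm rm d, bounded_op Num.norm Num.norm d,
        islinear tau /\ bounded_op Num.norm Num.norm tau,
        (forall a, in_center lm rm (tau a)) &
        (forall a b, tau (mul a b - mul b a) = 0) /\ (forall a, D a = d a + tau a)].
Proof.
have hlim : forall a, exists y, net_to0 le (fun l => `|y - zz a l|).
  by move=> a; exact: (net_complete hLam (small2_cauchy hLam (zz_cauchy a))).
have [tau htau] := choice hlim.
pose ii c l := lm c (Phi (t l)) - rm (Phi (t l)) c.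
pose d a := D a - tau a.
have [KP hKP] := hPhib.
have KP0 : 0 <= KP by case: hLam => [[l]] _ _ _; apply: le_trans (hKP l).
have hd : forall c, net_to0 le (fun l => `|d c - ii c l|).
  move=> c; apply: (small_le (f := fun l => `|tau c - zz c l| + `|qq c l|)); last first.
    by apply: small_add; [exact: hLam | exact: htau | exact: small_q].
  move=> l; rewrite /d /ii (zm8 _ _ _ _ (qq c l)) -/(yy c l) -zz_dec.
  by apply: le_trans (ler_normB _ _) _; rewrite distrC.
have iilin : forall c a b l, ii (c *: a + b) l = c *: ii a l + ii b l.
  by move=> c a b l; rewrite /ii (lm_l hX) (rm_r hX) zm4.
have dlin : islinear d.
  move=> c a b; apply: (@small_eq _ _ _ hLam _ _ _ (fun l => `|d (c *: a + b) - ii (c *: a + b) l| +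
     (`|c| * `|d a - ii a l| + `|d b - ii b l|))); last first.
    apply: (small_add hLam); first exact: hd.
    apply: (small_add hLam); last exact: hd.
    by apply: small_mul; [exact: normr_ge0 | move=> l; exact: normr_ge0 | exact: hd].
  move=> l; rewrite (zm12 _ (ii (c *: a + b) l)) iilin zm4.
  apply: le_trans (ler_normB _ _) _; apply: lerD => //.
  by apply: le_trans (ler_normD _ _) _; rewrite normrZ.
have iider : forall a b l, ii (mul a b) l = rm (ii a l) b + lm a (ii b l).
  move=> a b l; rewrite /ii (linB _ _ (rm_l hX b)) (linB _ _ (lm_r hX a)).
  by rewrite (lmM hX) (rmM hX) (lmrm hX) [RHS]addrC addrA subrK.

have dder : forall a b, d (mul a b) = rm (d a) b + lm a (d b).
  move=> a b; apply: (@small_eq _ _ _ hLam _ _ _ (fun l => `|d (mul a b) - ii (mul a b) l| +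
     (`|d a - ii a l| * `|b| + `|a| * `|d b - ii b l|))); last first.
    apply: (small_add hLam); first exact: hd.
    apply: (small_add hLam).
      under eq_fun do rewrite mulrC.
      by apply: small_mul; [exact: normr_ge0 | move=> l; exact: normr_ge0 | exact: hd].
    by apply: small_mul; [exact: normr_ge0 | move=> l; exact: normr_ge0 | exact: hd].
  move=> l; rewrite (zm12 _ (ii (mul a b) l)) iider.
  have -> : rm (d a) b + lm a (d b) - (rm (ii a l) b + lm a (ii b l)) =
            rm (d a - ii a l) b + lm a (d b - ii b l).
    by rewrite (linB (d a) (ii a l) (rm_l hX b)) (linB (d b) (ii b l) (lm_r hX a)) opprD addrACA.
  apply: le_trans (ler_normB _ _) _; apply: lerD => //.
  apply: le_trans (ler_normD _ _) _; apply: lerD; [exact: (rm_bnd hX) | exact: (lm_bnd hX)].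
have dbnd : bounded_op Num.norm Num.norm d.
  exists (KP + KP) => a.
  apply: (@small_bound _ _ _ hLam _ _ (fun l => `|d a - ii a l|)).
  - exact: normr_ge0.
  - by apply: mulr_ge0 => //; apply: addr_ge0.
  - move=> l; rewrite addrC; apply: (le_trans (y := `|d a - ii a l| + `|ii a l|)).
      by rewrite -{1}(subrK (ii a l) (d a)); apply: ler_normD.
    apply: lerD => //; rewrite /ii; apply: le_trans (ler_normB _ _) _.
    rewrite mulrDl; apply: lerD.
      by apply: le_trans (lm_bnd hX _ _) _; rewrite mulrC; apply: ler_wpM2r.
    by apply: le_trans (rm_bnd hX _ _) _; apply: ler_wpM2r.
  - exact: hd.
have tauE : forall a, tau a = D a - d a by move=> a; rewrite /d opprB addrC subrK.
have hc : forall a c, lm c (tau a) = rm (tau a) c.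
  move=> a c.
  apply: (@small_eq _ _ _ hLam _ _ _ (fun l => `|c| * `|tau a - zz a l| + `|D a| * `|delta c (t l)|
     + `|tau a - zz a l| * `|c|)); last first.
    apply: (small_add hLam); last first.
      under eq_fun do rewrite mulrC.
      by apply: small_mul; [exact: normr_ge0 | move=> l; exact: normr_ge0 | exact: htau].
    apply: (small_add hLam).
      by apply: small_mul; [exact: normr_ge0 | move=> l; exact: normr_ge0 | exact: htau].
    by apply: small_mul; [exact: normr_ge0 | move=> l; exact: normr_ge0 | exact: small_delta].
  move=> l; rewrite (zm13 _ _ (lm c (zz a l)) (rm (zz a l) c)).
  rewrite -(linB _ _ (lm_r hX c)) -(linB _ _ (rm_l hX c)).
  have -> : lm c (zz a l) - rm (zz a l) c = psi (D a) (delta c (t l)).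
    by rewrite /zz -(ul_emb lm c) -(ur_emb rm _ c) ul_psi ur_psi -(linB _ _ (psi_lin _)).
  apply: le_trans (ler_normB _ _) _; apply: lerD; last exact: (rm_bnd hX).
  apply: le_trans (ler_normD _ _) _; apply: lerD; [exact: (lm_bnd hX) | exact: psi_norm].
exists d, tau; split.
- by split.
- exact: dbnd.
- split.
    by move=> c a b; rewrite !tauE D_lin dlin zm4.
  have [MD [MD0 hMD]] := bnd_pos (fun _ => normr_ge0 _) (fun _ => normr_ge0 _) hDb.
  have [Md [Md0 hMd]] := bnd_pos (fun _ => normr_ge0 _) (fun _ => normr_ge0 _) dbnd.
  exists (MD + Md) => a; rewrite tauE mulrDl; apply: le_trans (ler_normB _ _) _.
  exact: lerD.
- move=> a c; exact: hc.
- split; last by move=> a; rewrite /d subrK.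
  move=> a b; rewrite tauE (linB _ _ dlin) !dder.
  case: hD => _ ->.
  have Ea : D a = d a + tau a by rewrite /d subrK.
  have Eb : D b = d b + tau b by rewrite /d subrK.
  rewrite Ea Eb (rmD hX) (lmD hX) (rmD hX) (lmD hX).
  rewrite (hc b a) (hc a b).
  exact: zm9.
Qed.

End Main.


Local Close Scope classical_set_scope.
Unset Implicit Arguments.

Theorem theorem6p4
  (R : realType) (A X T : completeNormedModType R[i])
  (mul : A -> A -> A) (lm : A -> X -> X) (rm : X -> A -> X)
  (hA : banach_algebra mul) (hX : banach_bimodule mul lm rm)
  (* T = A^# (^) A^#, with its module actions, flip and product map *)
  (tens : A * R[i] -> A * R[i] -> T)
  (hT : is_proj_tensor (@unit_norm R A) tens)
  (lact : A * R[i] -> T -> T)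
  (hlact : forall u, [/\ islinear (lact u), bounded_op Num.norm Num.norm (lact u) &
             forall v w, lact u (tens v w) = tens (unit_mul mul u v) w])
  (ract : A * R[i] -> T -> T)
  (hract : forall u, [/\ islinear (ract u), bounded_op Num.norm Num.norm (ract u) &
             forall v w, ract u (tens v w) = tens v (unit_mul mul w u)])
  (flip : T -> T)
  (hflip : [/\ islinear flip, bounded_op Num.norm Num.norm flip &
             forall v w, flip (tens v w) = tens w v])
  (pi : T -> A * R[i])
  (hpi : [/\ islinear pi, bounded_op Num.norm (@unit_norm R A) pi &
             forall v w, pi (tens v w) = unit_mul mul v w])
  (* symmetric approximate diagonal of A^# *)
  (Lam : Type) (le : Lam -> Lam -> Prop) (t : Lam -> T)
  (hLam : directed le)
  (hsym : forall l, flip (t l) = t l)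
  (hdiag : forall u, net_to0 le (fun l => `|lact u (t l) - ract u (t l)|))
  (hunit : forall u, net_to0 le (fun l => unit_norm (unit_mul mul (pi (t l)) u - u)))
  (* psi_x and boundedness of the nets psi_x(t_l) *)
  (psi : X -> T -> X)
  (hpsi : forall x, [/\ islinear (psi x), bounded_op Num.norm Num.norm (psi x) &
             forall v w, psi x (tens v w) = unit_ract rm (unit_lact lm v x) w])
  (hpsib : forall x, net_bounded Num.norm (fun l => psi x (t l)))
  (* bounded Lie derivation D and Phi_D *)
  (D : A -> X)
  (hD : is_lie_derivation mul lm rm D) (hDb : bounded_op Num.norm Num.norm D)
  (Phi : T -> X)
  (hPhi : [/\ islinear Phi, bounded_op Num.norm Num.norm Phi &
             forall v w, Phi (tens v w) = unit_lact lm v (D w.1)])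
  (hPhib : net_bounded Num.norm (fun l => Phi (t l))) :
  exists (d tau : A -> X),
    [/\ is_derivation mul lm rm d, bounded_op Num.norm Num.norm d,
        islinear tau /\ bounded_op Num.norm Num.norm tau,
        (forall a, in_center lm rm (tau a)) &
        (forall a b, tau (mul a b - mul b a) = 0) /\ (forall a, D a = d a + tau a)].
Proof. About main_result. exact: (main_result hA hX hT hlact hract hflip hpi hpsi hD hDb hPhi hLam hsym hdiag hunit hpsib hPhib). Qed.
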